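(* If $G$ is a (not necessarily connected) graph of order $n\ge 4$, then $7\le \gamma_{qtR}(G)+\gamma_{qtR}(\overline{G})\le n+5$. Moreover: (i) $\gamma_{qtR}(G)+\gamma_{qtR}(\overline{G})=7$ if and only if $G$ is one of $K_4$, $\overline{K_4}$, $K_4-e$, $\overline{K_4-e}$, or $G\in\mathcal{F}_1\cup\mathcal{F}'_1$; (ii) $\gamma_{qtR}(G)+\gamma_{qtR}(\overline{G})=n+5$ if and only if $G$ is the cycle $C_5$.
   Context: All graphs are finite, simple and undirected; $\overline{G}$ denotes the complement of $G$, and $K_4-e$ is $K_4$ with one edge removed. $\mathcal{F}_1$ is the family of all graphs of order $n$ that have exactly one vertex of degree $n-1$ and at least one vertex of degree one; $\mathcal{F}'_1$ is the family of complements of graphs in $\mathcal{F}_1$. For $f:V(G)\to\{0,1,2\}$ write $V_i=\{v:f(v)=i\}$; weight $\omega(f)=|V_1|+2|V_2|$. A quasi-total Roman dominating function (QTRDF) is an $f$ such that every vertex labeled $0$ is adjacent to a vertex labeled $2$, and every vertex isolated in the subgraph induced by $V_1\cup V_2$ has label $1$; $\gamma_{qtR}(G)$ is the minimum weight of a QTRDF. *)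

(* Defs.v *)
(* Simple graphs: a symmetric irreflexive relation e on a finType T. *)
From mathcomp Require Import all_boot.
Set Implicit Arguments. Unset Strict Implicit. Unset Printing Implicit Defensive.

Section Graphs.
Variable T : finType.

Definition compl (e : rel T) : rel T := [rel x y | (x != y) && ~~ e x y].

Definition deg (e : rel T) (v : T) : nat := #|[set u | e v u]|.

Definition is_qtrdf (e : rel T) (f : {ffun T -> 'I_3}) : bool :=
  [forall v, (val (f v) == 0) ==> [exists u, e v u && (val (f u) == 2)]] &&
  [forall v, ((val (f v) != 0) && [forall u, e v u ==> (val (f u) == 0)])
              ==> (val (f v) == 1)].

Definition weight (f : {ffun T -> 'I_3}) : nat := \sum_(v : T) val (f v).

(* minimum weight of a QTRDF; the constant-1 function is always a QTRDF of
   weight #|T|, so the default value #|T| does not affect the minimum. *)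
Definition gamma_qtR (e : rel T) : nat :=
  \big[minn/#|T|]_(f : {ffun T -> 'I_3} | is_qtrdf e f) weight f.

Definition inF1 (e : rel T) : bool :=
  (#|[set v | deg e v == #|T|.-1]| == 1) && [exists v, deg e v == 1].

Definition inF1' (e : rel T) : bool := inF1 (compl e).

Definition iso (e : rel T) (k : nat) (e' : rel 'I_k) : Prop :=
  exists h : T -> 'I_k, bijective h /\ forall x y, e x y = e' (h x) (h y).
End Graphs.
Arguments iso {T} e {k} e'.

Definition completeG (k : nat) : rel 'I_k := [rel i j | i != j].
Definition emptyG (k : nat) : rel 'I_k := [rel i j | false].
Definition K4_minus_e : rel 'I_4 :=
  [rel i j | (i != j) && ~~ ((val i == 0) && (val j == 1) || (val i == 1) && (val j == 0))].
Definition cycleG (k : nat) : rel 'I_k :=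
  [rel i j | (val j == (val i).+1 %% k) || (val i == (val j).+1 %% k)].
Arguments completeG k : clear implicits.
Arguments emptyG k : clear implicits.
Arguments cycleG k : clear implicits.

(* Main.v *)
Require Import Defs.
From mathcomp Require Import all_boot zify.
From Stdlib Require Import FunctionalExtensionality.
Set Implicit Arguments. Unset Strict Implicit. Unset Printing Implicit Defensive.


Section Basics.
Variable T : finType.
Variable e : rel T.
Hypothesis e_sym : symmetric e.
Hypothesis e_irr : irreflexive e.

Definition full (u : T) := forall y, y != u -> e u y.

Lemma compl_sym : symmetric (compl e).
Proof. by move=> x y; rewrite /compl /= eq_sym e_sym. Qed.
Lemma compl_irr : irreflexive (compl e).
Proof. by move=> x; rewrite /compl /= eqxx. Qed.
Lemma compl_compl x y : compl (compl e) x y = e x y.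
Proof.
rewrite /compl /=; case: eqP => [->|_] /=; first by rewrite e_irr.
by rewrite negbK.
Qed.

Lemma Nset_compl x : [set y | compl e x y] = ~: (x |: [set y | e x y]).
Proof.
apply/setP=> y; rewrite !inE /compl /= negb_or; congr (_ && _).
by rewrite eq_sym.
Qed.

Lemma deg_le x : deg e x <= #|T|.-1.
Proof.
rewrite /deg -(cardsC1 x); apply: subset_leq_card; apply/subsetP=> y; rewrite !inE.
by apply: contraTneq => ->; rewrite e_irr.
Qed.

Lemma deg_compl x : deg (compl e) x = #|T|.-1 - deg e x.
Proof.
rewrite /deg Nset_compl.
have := cardsC (x |: [set y | e x y]); rewrite cardsU1 inE e_irr /=.
lia.
Qed.

Lemma deg_full x : deg e x = #|T|.-1 <-> full x.
Proof.
split.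
- move=> hd y ny.
  have: [set z | e x z] = [set~ x].
    apply/eqP; rewrite eqEcard cardsC1; rewrite /deg in hd; rewrite hd leqnn andbT.
    apply/subsetP=> z; rewrite !inE; by apply: contraTneq => ->; rewrite e_irr.
  by move/setP/(_ y); rewrite !inE ny.
- move=> hf; apply/eqP; rewrite eqn_leq deg_le /deg -(cardsC1 x).
  by apply: subset_leq_card; apply/subsetP=> z; rewrite !inE => /hf.
Qed.


Lemma bigmin_le_seq (I : eqType) (r : seq I) (P : pred I) (F : I -> nat) x j :
  j \in r -> P j -> \big[minn/x]_(i <- r | P i) F i <= F j.
Proof.
elim: r => [//|a r IH]; rewrite inE big_cons => /orP [/eqP <- -> | jr pj].
  exact: geq_minl.
case: (P a); last exact: IH.
by rewrite geq_min IH ?orbT.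
Qed.

Lemma gamma_le f : is_qtrdf e f -> gamma_qtR e <= weight f.
Proof. by move=> hf; apply: bigmin_le_seq => //; rewrite mem_index_enum. Qed.

Lemma gamma_ge k : k <= #|T| -> (forall f, is_qtrdf e f -> k <= weight f) ->
  k <= gamma_qtR e.
Proof.
move=> hk hf; rewrite /gamma_qtR; apply: (big_ind (fun m => k <= m)) => //.
by move=> x y hx hy; rewrite leq_min hx hy.
Qed.

Lemma gamma_len : gamma_qtR e <= #|T|.
Proof.
rewrite /gamma_qtR; elim: (index_enum _) => [|a r IH]; first by rewrite big_nil.
by rewrite big_cons; case: ifP => // _; rewrite geq_min IH orbT.
Qed.

Lemma q0 f v : is_qtrdf e f -> val (f v) = 0 -> exists u, e v u /\ val (f u) = 2.
Proof.
case/andP=> /forallP /(_ v) h _ hv; move: h; rewrite hv eqxx /=.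
by case/existsP=> u /andP [h1 /eqP h2]; exists u.
Qed.

Lemma q2 f v : is_qtrdf e f -> val (f v) = 2 -> exists u, e v u /\ val (f u) != 0.
Proof.
case/andP=> _ /forallP /(_ v) h hv; move: h; rewrite hv /=.
case: (boolP [exists u, e v u && (val (f u) != 0)]).
  by case/existsP=> u /andP [h1 h2]; exists u.
rewrite negb_exists => /forallP hn.
have -> : [forall u, e v u ==> (val (f u) == 0)].
  by apply/forallP=> u; move: (hn u); rewrite negb_and negbK; case: (e v u).
by [].
Qed.

Lemma qiso f v : is_qtrdf e f -> (forall u, ~~ e v u) -> val (f v) = 1.
Proof.
move=> hq hi; case hv: (val (f v)) => [|[|[|k]]] //.
- by have [u [hu _]] := q0 hq hv; move: (hi u); rewrite hu.
- by have [u [hu _]] := q2 hq hv; move: (hi u); rewrite hu.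
- by move: (ltn_ord (f v)); rewrite hv.
Qed.

Lemma qno2 f : is_qtrdf e f -> (forall v, val (f v) != 2) -> #|T| <= weight f.
Proof.
move=> hq h2; rewrite /weight -[X in X <= _]sum1_card; apply: leq_sum => v _.
case hv: (val (f v)) => [|//]; have [u [_ hu]] := q0 hq hv.
by move: (h2 u); rewrite hu.
Qed.

Lemma wseq (f : {ffun T -> 'I_3}) (s : seq T) : uniq s -> \sum_(z <- s) val (f z) <= weight f.
Proof.
move=> us; rewrite big_uniq // /weight [leqRHS](bigID (mem s)) /=.
exact: leq_addr.
Qed.

Lemma wseq_eq (f : {ffun T -> 'I_3}) (s : seq T) z : uniq s -> weight f <= \sum_(y <- s) val (f y) ->
  z \notin s -> val (f z) = 0.
Proof.
move=> us; rewrite big_uniq // /weight [leqLHS](bigID (mem s)) /=.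
rewrite -[X in _ <= X]addn0 leq_add2l leqn0 sum_nat_eq0 => /forallP hz zs.
by apply/eqP; move: (hz z); rewrite zs.
Qed.

Definition mkf (Z2 Z1 : {set T}) : {ffun T -> 'I_3} :=
  [ffun z => if z \in Z2 then inord 2 else if z \in Z1 then inord 1 else ord0].

Lemma mkfE (Z2 Z1 : {set T}) z : val (mkf Z2 Z1 z) =
  if z \in Z2 then 2 else if z \in Z1 then 1 else 0.
Proof.
rewrite ffunE; case: ifP => _ /=; first by rewrite inordK.
by case: ifP => _ //=; rewrite inordK.
Qed.

Lemma mkf_weight (Z2 Z1 : {set T}) : weight (mkf Z2 Z1) <= 2 * #|Z2| + #|Z1|.
Proof.
rewrite /weight -!sum1_card big_distrr /=.
rewrite [X in _ <= _ + X]big_mkcond [X in _ <= X + _]big_mkcond -big_split /=.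
apply: leq_sum => z _; rewrite mkfE.
by case: (z \in Z2); case: (z \in Z1).
Qed.

Lemma mkf_q (Z2 Z1 : {set T}) :
  (forall z, z \notin Z2 -> z \notin Z1 -> exists2 y, y \in Z2 & e z y) ->
  (forall z, z \in Z2 -> exists2 y, (y \in Z2) || (y \in Z1) & e z y) ->
  is_qtrdf e (mkf Z2 Z1).
Proof.
move=> h1 h2; apply/andP; split; apply/forallP=> z; rewrite mkfE.
- case: ifP => // z2; case: ifP => // z1 /=.
  have [y y2 ezy] := h1 z (negbT z2) (negbT z1).
  by apply/existsP; exists y; rewrite ezy mkfE y2.
- case: ifP => z2 /=; last by case: (z \in Z1); rewrite ?implybT.
  have [y y21 ezy] := h2 z z2.
  apply/implyP=> /forallP /(_ y); rewrite ezy mkfE /=.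
  by move: y21; case: (y \in Z2); case: (y \in Z1).
Qed.

Lemma U3 u v : e u v -> gamma_qtR e + deg e u <= #|T| + 2.
Proof.
move=> euv.
pose M := [set z | compl e u z].
have hq : is_qtrdf e (mkf [set u] (v |: M)).
  apply: mkf_q.
  - move=> z; rewrite !inE negb_or /compl /= => nzu /andP [_]; rewrite eq_sym nzu /= negbK.
    by move=> ezu; exists u; rewrite ?inE // e_sym.
  - by move=> z; rewrite inE => /eqP ->; exists v; rewrite // !inE eqxx orbT.
have := leq_trans (gamma_le hq) (mkf_weight _ _).
have := deg_compl u; have := deg_le u.
rewrite cards1 cardsU1 /deg -/M.
have : 0 < #|T| by apply/card_gt0P; exists u.
lia.
Qed.

Lemma U5 u v w1 w2 : e u v -> e v w1 -> e v w2 -> w1 != w2 ->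
  compl e u w1 -> compl e u w2 -> gamma_qtR e + deg e u <= #|T| + 1.
Proof.
move=> euv evw1 evw2 nw cw1 cw2.
pose M := [set z | compl e u z].
pose Nv := [set z | e v z].
have nuv : u != v by apply: contraTneq euv => ->; rewrite e_irr.
have hq : is_qtrdf e (mkf [set u; v] (M :\: Nv)).
  apply: mkf_q.
  - move=> z; rewrite !inE !negb_or /compl /= => /andP [nzu nzv].
    rewrite negb_and negbK eq_sym nzu /= negbK.
    case: (boolP (e u z)) => [ezu _ | nezu]; first by exists u; rewrite ?inE ?eqxx // e_sym.
    rewrite orbF => ezv.
    by exists v; rewrite ?inE ?eqxx ?orbT // e_sym.
  - move=> z; rewrite !inE => /orP [] /eqP ->.
      by exists v; rewrite // !inE eqxx orbT.
    by exists u; rewrite // ?inE ?eqxx // e_sym.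
have := leq_trans (gamma_le hq) (mkf_weight _ _).
have hc : #|M :&: Nv| >= 2.
  have -> : 2 = #|[set w1; w2]| by rewrite cards2 nw.
  by apply: subset_leq_card; apply/subsetP=> z; rewrite !inE => /orP [] /eqP ->;
     rewrite ?cw1 ?cw2 ?evw1 ?evw2.
have := cardsID Nv M.
have := deg_compl u; have := deg_le u.
rewrite cards2 nuv /deg -/M.
have : 0 < #|T| by apply/card_gt0P; exists u.
lia.
Qed.

Lemma U_full u v : full u -> v != u -> gamma_qtR e <= 3.
Proof.
move=> fu nvu; have := U3 (fu v nvu); have /deg_full := fu.
have : 0 < #|T| by apply/card_gt0P; exists u.
lia.
Qed.


Lemma val2_ex (f : {ffun T -> 'I_3}) : (forall v, val (f v) != 2) \/ exists v, val (f v) = 2.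
Proof.
case: (boolP [exists v, val (f v) == 2]).
  by case/existsP=> v /eqP h; right; exists v.
by rewrite negb_exists => /forallP h; left.
Qed.

Lemma neq_of_e x y : e x y -> x != y.
Proof. by apply: contraTneq => ->; rewrite e_irr. Qed.

Lemma LB3 f : 3 <= #|T| -> is_qtrdf e f -> 3 <= weight f.
Proof.
move=> n3 hq; case: (val2_ex f) => [h|[v hv]]; first exact: leq_trans n3 (qno2 hq h).
have [u [evu hu]] := q2 hq hv.
have := wseq f (s := [:: v; u]); rewrite /= inE andbT neq_of_e // => /(_ isT).
rewrite !big_cons big_nil hv; move: hu => /= hu; lia.
Qed.

Definition isol (x : T) := forall y, ~~ e x y.

Lemma LB4 f : 4 <= #|T| -> (forall u, ~ full u) -> is_qtrdf e f -> 4 <= weight f.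
Proof.
move=> n4 nf hq; case: (val2_ex f) => [h|[v hv]]; first exact: leq_trans n4 (qno2 hq h).
have [u [evu hu]] := q2 hq hv.
have uvu : uniq [:: v; u] by rewrite /= inE andbT neq_of_e.
have := wseq f uvu; rewrite !big_cons big_nil hv => hw.
rewrite leqNgt; apply/negP => hw3.
have hu1 : val (f u) = 1 by move: hu hw hw3 => /= hu hw hw3; lia.
have hz : forall z, z \notin [:: v; u] -> val (f z) = 0.
  move=> z; apply: wseq_eq => //; rewrite !big_cons big_nil hv hu1; lia.
apply: (nf v) => y nyv.
case: (eqVneq y u) => [-> //| nyu].
have hy : y \notin [:: v; u] by rewrite !inE negb_or nyv.
have [t [eyt ht]] := q0 hq (hz y hy).
case: (eqVneq t v) => [tv| ntv]; first by rewrite e_sym -tv.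
case: (eqVneq t u) => [tu|ntu]; first by move: ht; rewrite tu hu1.
by move: ht; rewrite hz // !inE negb_or ntv.
Qed.

Lemma LBa f a b : 5 <= #|T| -> isol a -> isol b -> a != b -> is_qtrdf e f -> 5 <= weight f.
Proof.
move=> n5 ia ib nab hq; case: (val2_ex f) => [h|[v hv]]; first exact: leq_trans n5 (qno2 hq h).
have ha := qiso hq ia; have hb := qiso hq ib.
have [u [evu hu]] := q2 hq hv.
have nva : v != a by apply: contra_eq_neq hv => ->; rewrite ha.
have nvb : v != b by apply: contra_eq_neq hv => ->; rewrite hb.
have nua : u != a by apply: contraTneq evu => ->; rewrite e_sym (negbTE (ia v)).
have nub : u != b by apply: contraTneq evu => ->; rewrite e_sym (negbTE (ib v)).
have us : uniq [:: a; b; v; u].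
  rewrite /= !inE !negb_or nab andbT (eq_sym a v) nva (eq_sym a u) nua.
  by rewrite (eq_sym b v) nvb (eq_sym b u) nub (neq_of_e evu).
have := wseq f us; rewrite !big_cons big_nil ha hb hv; move: hu; lia.
Qed.

Lemma LBb f a : 5 <= #|T| -> isol a ->
  (forall w, w != a -> ~ (forall z, z != a -> z != w -> e w z)) ->
  is_qtrdf e f -> 5 <= weight f.
Proof.
move=> n5 ia hyp hq; case: (val2_ex f) => [h|[v hv]]; first exact: leq_trans n5 (qno2 hq h).
have ha := qiso hq ia.
have [u [evu hu]] := q2 hq hv.
have nva : v != a by apply: contra_eq_neq hv => ->; rewrite ha.
have nua : u != a by apply: contraTneq evu => ->; rewrite e_sym (negbTE (ia v)).
have us : uniq [:: a; v; u].
  by rewrite /= !inE !negb_or andbT (eq_sym a v) nva (eq_sym a u) nua (neq_of_e evu).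
have := wseq f us; rewrite !big_cons big_nil ha hv => hw.
rewrite leqNgt; apply/negP => hw4.
have hu1 : val (f u) = 1 by move: hu hw hw4 => /= hu hw hw4; lia.
have hz : forall z, z \notin [:: a; v; u] -> val (f z) = 0.
  move=> z; apply: wseq_eq => //; rewrite !big_cons big_nil hv hu1 ha; lia.
apply: (hyp v nva) => z nza nzv.
case: (eqVneq z u) => [-> //| nzu].
have hy : z \notin [:: a; v; u] by rewrite !inE !negb_or nza nzv nzu.
have [t [ezt ht]] := q0 hq (hz z hy).
case: (eqVneq t v) => [tv| ntv]; first by rewrite e_sym -tv.
case: (eqVneq t u) => [tu|ntu]; first by move: ht; rewrite tu hu1.
case: (eqVneq t a) => [ta|nta]; first by move: ht; rewrite ta ha.
by move: ht; rewrite hz // !inE !negb_or ntv nta ntu.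
Qed.


Lemma LB5 f : #|T| = 5 -> (forall x, exists y1 y2, forall y, e x y -> y = y1 \/ y = y2) ->
  is_qtrdf e f -> 5 <= weight f.
Proof.
move=> n5 hdeg hq; case: (val2_ex f) => [h|[v hv]]; first by rewrite -n5; exact: qno2 hq h.
have Nle1 : forall x w, e x w -> #|[set y | e x y] :\ w| <= 1.
  move=> x w exw; have [y1 [y2 hy]] := hdeg x.
  have : #|[set y | e x y]| <= 2.
    apply: leq_trans (_ : #|[set y1; y2]| <= 2); last by rewrite cards2; case: (_ != _).
    by apply: subset_leq_card; apply/subsetP=> y; rewrite !inE => /hy [] ->; rewrite eqxx ?orbT.
  by rewrite (cardsD1 w) inE exw.
have [v' [evv' hv']] := q2 hq hv.
rewrite leqNgt; apply/negP => hw.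
have nvv' := neq_of_e evv'.
have two_nbr : forall z, val (f z) = 0 -> (val (f v') = 2 /\ e v' z) \/ e v z.
  move=> z hz; have [t [ezt ht]] := q0 hq hz.
  case: (eqVneq t v) => [tv|ntv]; first by right; rewrite e_sym -tv.
  case: (eqVneq t v') => [tv|ntv']; first by left; rewrite -tv e_sym.
  have us : uniq [:: v; v'; t] by rewrite /= !inE negb_or nvv' eq_sym ntv eq_sym ntv'.
  have := wseq f us; rewrite !big_cons big_nil hv ht.
  by clear -hv' hw; move: hv' hw => /=; lia.
have cS : #|~: [set v; v']| = 3.
  by have := cardsC [set v; v']; rewrite cards2 nvv' n5; lia.
have [a aS] : exists a, a \in ~: [set v; v'] by apply/card_gt0P; rewrite cS.
have /cards2P [b [c [nbc hbc]]] : #|~: [set v; v'] :\ a| == 2.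
  by have := cardsD1 a (~: [set v; v']); rewrite aS cS add1n => -[<-].
have bS : b \in ~: [set v; v'] :\ a by rewrite hbc !inE eqxx.
have cS' : c \in ~: [set v; v'] :\ a by rewrite hbc !inE eqxx orbT.
move: aS bS cS'; rewrite !inE !negb_or => /andP [nav nav'] /and3P [nba nbv nbv'] /and3P [nca ncv ncv'].
have us : uniq [:: v; v'; a; b; c].
  rewrite /= !inE !negb_or nvv' !(eq_sym v) nav nbv ncv !(eq_sym v') nav' nbv' ncv'.
  by rewrite !(eq_sym a) nba nca nbc.
have := wseq f us; rewrite !big_cons big_nil hv => hw5.
have hin : forall z, val (f z) = 0 -> z != v -> z != v' ->
    (val (f v') = 2 /\ z \in [set y | e v' y] :\ v) \/ z \in [set y | e v y] :\ v'.
  move=> z hz nzv nzv'; rewrite !inE nzv nzv' /=; exact: two_nbr.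
have := Nle1 _ _ evv'; have := Nle1 _ _ (evv' : e v v'); rewrite {1}e_sym in evv'.
move=> Nv _; have Nv' := Nle1 _ _ evv'.
case: (eqVneq (val (f v')) 2) => [h2|n2].
  have [ha [hb hc]] : val (f a) = 0 /\ val (f b) = 0 /\ val (f c) = 0.
    by clear -hw hw5 h2; move: hw hw5 => /=; rewrite h2; lia.
  have sub : [set a; b; c] \subset ([set y | e v' y] :\ v) :|: ([set y | e v y] :\ v').
    apply/subsetP=> z hz; rewrite in_setU.
    have : [|| z == a, z == b | z == c] by move: hz; rewrite !inE -!orbA.
    case/or3P => /eqP ->.
    - by case: (hin a ha nav nav') => [[_ ->]|->]; rewrite ?orbT.
    - by case: (hin b hb nbv nbv') => [[_ ->]|->]; rewrite ?orbT.
    - by case: (hin c hc ncv ncv') => [[_ ->]|->]; rewrite ?orbT.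
  have := subset_leq_card sub; have := cardsU ([set y | e v' y] :\ v) ([set y | e v y] :\ v').
  rewrite -setUA cardsU1 cards2 !inE negb_or (eq_sym a b) nba (eq_sym a c) nca nbc /=.
  by clear -Nv Nv'; move: Nv Nv'; lia.
have hin1 : forall z, val (f z) = 0 -> z != v -> z != v' -> z \in [set y | e v y] :\ v'.
  by move=> z hz nzv nzv'; case: (hin z hz nzv nzv') => [[h2 _]|//]; move: n2; rewrite h2.
have pair : forall p q, p != q -> p != v -> p != v' -> q != v -> q != v' ->
    val (f p) = 0 -> val (f q) = 0 -> False.
  move=> p q npq npv npv' nqv nqv' hp hq'.
  have sub : [set p; q] \subset [set y | e v y] :\ v'.
    apply/subsetP=> z hz; have : (z == p) || (z == q) by move: hz; rewrite !inE.
    by case/orP => /eqP ->; apply: hin1.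
  by have := subset_leq_card sub; rewrite cards2 npq; clear -Nv; move: Nv; lia.
case: (eqVneq (val (f a)) 0) => ha.
  case: (eqVneq (val (f b)) 0) => hb; first by apply: (pair a b) => //; rewrite eq_sym.
  have hc : val (f c) = 0 by clear -hw hw5 hv' hb; move: hw hw5 hv' hb => /=; lia.
  by apply: (pair a c) => //; rewrite eq_sym.
have [hb hc] : val (f b) = 0 /\ val (f c) = 0.
  by clear -hw hw5 hv' ha; move: hw hw5 hv' ha => /=; lia.
by apply: (pair b c).
Qed.

End Basics.


Lemma iso_seq (T : finType) (e : rel T) k (e' : rel 'I_k.+1) (s : seq T) x0 :
  uniq s -> size s = k.+1 -> (forall x, x \in s) ->
  (forall i j : 'I_k.+1, e (nth x0 s i) (nth x0 s j) = e' i j) -> iso e e'.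
Proof.
move=> us ss cov he.
pose h := fun x => (inord (index x s) : 'I_k.+1).
pose g := fun i : 'I_k.+1 => nth x0 s i.
have hgK : cancel h g.
  move=> x; rewrite /g /h inordK ?nth_index //.
  by rewrite -ss index_mem.
have ghK : cancel g h.
  move=> i; apply: val_inj; rewrite /g /h /= index_uniq ?inordK ?ss //.
have hbij : bijective h by exists g.
exists h; split => // x y; rewrite -he.
by rewrite -[in LHS](hgK x) -[in LHS](hgK y).
Qed.

Lemma iso_card (T : finType) (e : rel T) k (e' : rel 'I_k) : iso e e' -> #|T| = k.
Proof. by case=> h [hb _]; rewrite (bij_eq_card hb) card_ord. Qed.

Lemma iso_compl (T : finType) (e : rel T) k (e' : rel 'I_k) :
  iso e e' -> iso (compl e) (compl e').
Proof.
case=> h [hb he]; exists h; split => // x y; rewrite /compl /= he.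
by rewrite (inj_eq (bij_inj hb)).
Qed.

Lemma complete_iso (T : finType) (e : rel T) k :
  #|T| = k.+1 -> (forall x y, e x y = (x != y)) -> iso e (completeG k.+1).
Proof.
move=> hc he; have : 0 < #|T| by rewrite hc.
case/card_gt0P => x0 _.
apply: (@iso_seq _ _ _ _ (enum T) x0).
- exact: enum_uniq.
- by rewrite -cardE.
- by move=> x; rewrite mem_enum.
- move=> i j; rewrite he /= nth_uniq ?enum_uniq -?cardE ?hc //.
Qed.

Lemma compl_complE (T : finType) (e : rel T) : irreflexive e -> compl (compl e) = e.
Proof.
move=> irr; apply: functional_extensionality => x; apply: functional_extensionality => y.
exact: compl_compl.
Qed.

Definition fullb (T : finType) (e : rel T) u := [forall y, (y != u) ==> e u y].
Lemma fullP (T : finType) (e : rel T) u : reflect (full e u) (fullb e u).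
Proof.
apply: (iffP forallP) => h y; first by move=> nyu; move: (h y); rewrite nyu.
by apply/implyP; apply: h.
Qed.

Lemma gam3 (T : finType) (e : rel T) : symmetric e -> irreflexive e -> 3 <= #|T| -> 3 <= gamma_qtR e.
Proof. by move=> hs hi n3; apply: gamma_ge => // f; apply: LB3. Qed.

Lemma gam4 (T : finType) (e : rel T) : symmetric e -> irreflexive e -> 4 <= #|T| ->
  (forall u, ~ full e u) -> 4 <= gamma_qtR e.
Proof. by move=> hs hi n4 nf; apply: gamma_ge => // f; apply: LB4. Qed.

Lemma other (T : finType) (u : T) : 2 <= #|T| -> exists v, v != u.
Proof.
move=> n2; have : 0 < #|[set~ u]| by rewrite cardsC1; lia.
by case/card_gt0P => v; rewrite !inE => h; exists v.
Qed.

Section Main.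
Variable T : finType.
Variable e : rel T.
Hypothesis e_sym : symmetric e.
Hypothesis e_irr : irreflexive e.
Hypothesis n4 : 4 <= #|T|.

Let ce_sym := compl_sym e_sym.
Let ce_irr := compl_irr e.

Lemma not_both u x : full e u -> full (compl e) x -> False.
Proof.
move=> fu fx; case: (eqVneq x u) => [exu|nxu].
  subst x.
  have [y nyu] := other u (leq_trans (isT : 2 <= 4) n4).
  by move: (fx y nyu) (fu y nyu); rewrite /compl /= => /andP [_ /negP].
have h1 := fu x nxu.
have : compl e x u by apply: fx; rewrite eq_sym.
by rewrite /compl /= e_sym h1 andbF.
Qed.

Lemma lower7 : 7 <= gamma_qtR e + gamma_qtR (compl e).
Proof.
have n3 : 3 <= #|T| by lia.
case: (boolP [exists u, fullb e u]) => [/existsP [u /fullP fu]|].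
  have : 4 <= gamma_qtR (compl e).
    by apply: gam4 => // x fx; apply: (not_both fu fx).
  have := gam3 e_sym e_irr n3; lia.
rewrite negb_exists => /forallP nf.
have : 4 <= gamma_qtR e by apply: gam4 => // x /fullP; apply/negP.
have := gam3 ce_sym ce_irr n3; lia.
Qed.


Lemma reg_struct r : (forall x, deg e x = r) -> 2 <= r -> r + 3 <= #|T| ->
  (forall u v w1 w2, e u v -> e v w1 -> e v w2 -> w1 != w2 -> compl e u w1 -> compl e u w2 -> False) ->
  (forall u v w1 w2, compl e u v -> compl e v w1 -> compl e v w2 -> w1 != w2 -> e u w1 -> e u w2 -> False) ->
  iso e (cycleG 5).
Proof.
move=> hreg r2 rn nU nUc.
have : 0 < #|T| by lia.
case/card_gt0P => u _.
pose A := [set y | e u y]; pose B := [set y | compl e u y].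
have cA : #|A| = r by rewrite -(hreg u).
have cB : #|B| = #|T|.-1 - r by rewrite -(hreg u) -deg_compl.
pose X w := A :&: [set y | e w y].
have XA w : X w \subset A by apply: subsetIl.
have hX : forall w, w \in B -> r <= #|X w| + 1.
  move=> w wB; have := cardsID [set y | e w y] A; rewrite -/(X w) cA.
  suff : #|A :\: [set y | e w y]| <= 1 by lia.
  apply/card_le1_eqP => a1 a2; rewrite !inE => /andP [na1 a1A] /andP [na2 a2A].
  suff -> : a1 = a2 by [].
  apply/eqP; apply/negP => /negP n12.
  have nwa1 : w != a1 by apply: contraTneq wB => ->; rewrite inE /compl /= a1A andbF.
  have nwa2 : w != a2 by apply: contraTneq wB => ->; rewrite inE /compl /= a2A andbF.
  apply: (nUc u w a1 a2) => //; first by rewrite inE in wB.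
  - by rewrite /compl /= nwa1.
  - by rewrite /compl /= nwa2.
have hdisj : forall w1 w2 a, w1 \in B -> w2 \in B -> w1 != w2 -> a \in X w1 -> a \in X w2 -> False.
  move=> w1 w2 a; rewrite !inE => b1 b2 n12 /andP [ea h1] /andP [_ h2].
  by apply: (nU u a w1 w2) => //; rewrite e_sym.
have cU : forall w1 w2, w1 \in B -> w2 \in B -> w1 != w2 -> #|X w1 :|: X w2| = #|X w1| + #|X w2|.
  move=> w1 w2 h1 h2 n12; rewrite cardsU.
  suff -> : X w1 :&: X w2 = set0 by rewrite cards0 subn0.
  apply/setP=> a; rewrite inE [in RHS]inE; apply/negP => /andP [a1 a2].
  exact: hdisj h1 h2 n12 a1 a2.
have [b1 b1B] : exists b1, b1 \in B by apply/card_gt0P; lia.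
have [b2 b2B'] : exists b2, b2 \in B :\ b1.
  by apply/card_gt0P; move: (cardsD1 b1 B); rewrite b1B; lia.
have b2B : b2 \in B by move: b2B'; rewrite inE => /andP [_ h].
have n12 : b2 != b1 by move: b2B'; rewrite !inE => /andP [h _].
have r2e : r = 2.
  have sub : X b1 :|: X b2 \subset A by rewrite subUset !XA.
  have := subset_leq_card sub.
  rewrite cU // ?(eq_sym b1) // cA.
  have := hX b1 b1B; have := hX b2 b2B; lia.
have cB2 : #|B| = 2.
  apply/eqP; rewrite eqn_leq; apply/andP; split; last first.
    by move: (cardsD1 b1 B); rewrite b1B; move: (cardsD1 b2 (B :\ b1)); rewrite b2B'; lia.
  rewrite leqNgt; apply/negP => h3.
  have [b3 b3B'] : exists b3, b3 \in B :\ b1 :\ b2.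
    apply/card_gt0P; move: (cardsD1 b1 B); rewrite b1B; move: (cardsD1 b2 (B :\ b1)); rewrite b2B'; lia.
  move: b3B'; rewrite !inE => /and3P [n32 n31 b3B].
  have sub : X b1 :|: X b2 :|: X b3 \subset A by rewrite !subUset !XA.
  have := subset_leq_card sub.
  rewrite cardsU.
  have -> : (X b1 :|: X b2) :&: X b3 = set0.
    apply/setP=> a; rewrite !inE; apply/negP => /andP [/orP [] ha hb].
    - by apply: (hdisj b1 b3 a) => //; rewrite ?inE // eq_sym.
    - by apply: (hdisj b2 b3 a) => //; rewrite ?inE // eq_sym.
  rewrite cU ?(eq_sym b1) // cards0 subn0 cA.
  have b3B2 : b3 \in B by rewrite inE.
  have := hX b1 b1B; have := hX b2 b2B; have := hX b3 b3B2; lia.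
have [a1 a1X] : exists a, a \in X b1 by apply/card_gt0P; have := hX b1 b1B; lia.
have [a2 a2X] : exists a, a \in X b2 by apply/card_gt0P; have := hX b2 b2B; lia.
have n12a : a1 != a2.
  by apply/negP => /eqP ea; apply: (hdisj b1 b2 a1) => //; rewrite ?(eq_sym b1) // ea.
have nb12 : b1 != b2 by rewrite eq_sym.
move: (a1X) (a2X); rewrite !inE => /andP [ua1 b1a1] /andP [ua2 b2a2].
move: (b1B) (b2B); rewrite !inE /compl /= => /andP [nub1 ub1] /andP [nub2 ub2].
have eub1 := negbTE ub1; have eub2 := negbTE ub2.
have ea1b2 : e a1 b2 = false.
  apply/negP => h; apply: (hdisj b1 b2 a1) => //; rewrite !inE ua1 /= e_sym //.
have ea2b1 : e a2 b1 = false.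
  apply/negP => h; apply: (hdisj b1 b2 a2) => //; rewrite !inE ua2 /= e_sym //.
have AE : A = [set a1; a2].
  apply/eqP; rewrite eq_sym eqEcard cards2 n12a cA r2e andbT.
  by apply/subsetP=> z; rewrite !inE => /orP [] /eqP ->.
have BE : B = [set b1; b2].
  apply/eqP; rewrite eq_sym eqEcard cards2 nb12 cB2 andbT.
  apply/subsetP=> z; rewrite !inE /compl /= => /orP [] /eqP ->.
  - by rewrite nub1 ub1.
  - by rewrite nub2 ub2.
have cov : forall x, x \in [:: u; a1; b1; b2; a2].
  move=> x; rewrite !inE.
  case: (eqVneq x u) => [//|nxu] /=.
  case: (boolP (e u x)) => hux.
    have : x \in A by rewrite inE.
    by rewrite AE !inE => /orP [] ->; rewrite ?orbT.
  have : x \in B by rewrite inE /compl /= eq_sym nxu hux.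
  by rewrite BE !inE => /orP [] ->; rewrite ?orbT.
have ea1a2 : e a1 a2 = false.
  apply/negP => h.
  have : [set u; b1; a2] \subset [set y | e a1 y].
    apply/subsetP=> z; rewrite !inE -orbA => /or3P [] /eqP ->; rewrite // e_sym //.
  move/subset_leq_card; rewrite -/(deg e a1) hreg r2e.
  rewrite setUC cardsU1 cards2 !inE negb_or.
  have nua2 : u != a2 by apply: (neq_of_e e_irr).
  have nb1a2 : b1 != a2 by apply/eqP => eb; move: eub1; rewrite eb ua2.
  by rewrite (eq_sym a2 u) nua2 (eq_sym a2 b1) nb1a2 nub1.
have eb1b2 : e b1 b2 = true.
  apply/negP => /negP h.
  have : [set y | e b1 y] \subset [set a1].
    apply/subsetP=> z; rewrite !inE => hz.
    move: (cov z); rewrite !inE => /orP [/eqP ez|/orP [/eqP ez|/orP [/eqP ez|/orP [/eqP ez|/eqP ez]]]]; subst z.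
    - by move: hz; rewrite e_sym eub1.
    - by [].
    - by move: hz; rewrite e_irr.
    - by move: hz; rewrite (negbTE h).
    - by move: hz; rewrite e_sym ea2b1.
  move/subset_leq_card; rewrite -/(deg e b1) hreg r2e cards1 //.
have nua1 : u != a1 by apply: (neq_of_e e_irr).
have nua2 : u != a2 by apply: (neq_of_e e_irr).
have na1b1 : a1 != b1 by rewrite eq_sym; apply: (neq_of_e e_irr).
have na1b2 : a1 != b2 by apply/eqP => eb; move: eub2; rewrite -eb ua1.
have nb1a2 : b1 != a2 by apply/eqP => eb; move: eub1; rewrite eb ua2.
have nb2a2 : b2 != a2 by apply: (neq_of_e e_irr).
apply: (@iso_seq _ _ 4 _ [:: u; a1; b1; b2; a2] u) => //.
  by rewrite /= !inE !negb_or nua1 nub1 nub2 nua2 na1b1 na1b2 n12a nb12 nb1a2 nb2a2.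
move=> [[|[|[|[|[|i]]]]] hi] [[|[|[|[|[|j]]]]] hj] //=; rewrite /cycleG /=;
  rewrite ?e_irr ?ua1 ?ua2 ?b1a1 ?b2a2 ?ea1b2 ?ea2b1 ?ea1a2 ?eb1b2 //;
  rewrite e_sym ?ua1 ?ua2 ?b1a1 ?b2a2 ?ea1b2 ?ea2b1 ?ea1a2 ?eb1b2 //.
Qed.


Lemma nbr_c x : ~ full (compl e) x -> exists y, e x y.
Proof.
move=> nf; case: (boolP [exists y, e x y]) => [/existsP [y h] | ]; first by exists y.
rewrite negb_exists => /forallP h; exfalso; apply: nf => y nyx.
by rewrite /compl /= eq_sym nyx (h y).
Qed.

Lemma cnbr x : ~ full e x -> exists y, compl e x y.
Proof.
move=> nf; case: (boolP [exists y, compl e x y]) => [/existsP [y h] | ]; first by exists y.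
rewrite negb_exists => /forallP h; exfalso; apply: nf => y nyx.
by move: (h y); rewrite /compl /= eq_sym nyx /= negbK.
Qed.

Lemma trichot : (exists u, full e u) \/ (exists x, full (compl e) x) \/
  (forall x, ~ full e x /\ ~ full (compl e) x).
Proof.
case: (boolP [exists u, fullb e u]) => [/existsP [u /fullP h]|]; first by left; exists u.
case: (boolP [exists u, fullb (compl e) u]) => [/existsP [u /fullP h]|]; first by right; left; exists u.
rewrite !negb_exists => /forallP h2 /forallP h1; right; right => x.
by split => /fullP hf; [move: (h1 x) | move: (h2 x)]; rewrite hf.
Qed.

Lemma bound_none x y : ~ full (compl e) x -> ~ full e y ->
  gamma_qtR e + gamma_qtR (compl e) + deg e x <= #|T| + 5 + deg e y.
Proof.
move=> nfx nfy; have [x' hx] := nbr_c nfx; have [y' hy] := cnbr nfy.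
have := U3 e_sym e_irr hx; have := U3 ce_sym ce_irr hy.
rewrite (deg_compl e_irr); have := deg_le e_irr y; lia.
Qed.

Lemma full_small : (exists u, full e u) \/ (exists x, full (compl e) x) ->
  gamma_qtR e + gamma_qtR (compl e) <= #|T| + 3.
Proof.
case=> [[u fu]|[x fx]].
  have [v nvu] := other u (leq_trans (isT : 2 <= 4) n4).
  have := U_full e_sym e_irr fu nvu; have := gamma_len (compl e); lia.
have [v nvx] := other x (leq_trans (isT : 2 <= 4) n4).
have := U_full ce_sym ce_irr fx nvx; have := gamma_len e; lia.
Qed.

Lemma upper5 : gamma_qtR e + gamma_qtR (compl e) <= #|T| + 5.
Proof.
case: trichot => [h|[h|h]].
- by have := full_small (or_introl h); lia.
- by have := full_small (or_intror h); lia.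
have : 0 < #|T| by lia.
case/card_gt0P => x _; have [h1 h2] := h x; have := bound_none h2 h1; lia.
Qed.

Lemma eq5 : gamma_qtR e + gamma_qtR (compl e) = #|T| + 5 -> iso e (cycleG 5).
Proof.
move=> hs.
case: trichot => [h|[h|h]].
- by have := full_small (or_introl h); lia.
- by have := full_small (or_intror h); lia.
have : 0 < #|T| by lia.
case/card_gt0P => u0 _.
pose r := deg e u0.
have hreg : forall x, deg e x = r.
  move=> x; apply/eqP; rewrite eqn_leq.
  have := bound_none (proj2 (h x)) (proj1 (h u0)).
  have := bound_none (proj2 (h u0)) (proj1 (h x)).
  rewrite /r hs; lia.
have [v0 hv0] := nbr_c (proj2 (h u0)).
have [w0 hw0] := cnbr (proj1 (h u0)).
have t1 := U3 e_sym e_irr hv0; have t2 := U3 ce_sym ce_irr hw0.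
rewrite (deg_compl e_irr) in t2.
have dl := deg_le e_irr u0.
have gl1 := gamma_len e; have gl2 := gamma_len (compl e).
apply: (@reg_struct r hreg).
- rewrite /r; lia.
- rewrite /r; lia.
- move=> u v w1 w2 h1 h2 h3 h4 h5 h6.
  have := U5 e_sym e_irr h1 h2 h3 h4 h5 h6; rewrite hreg /r; lia.
- move=> u v w1 w2 h1 h2 h3 h4 h5 h6.
  have := U5 ce_sym ce_irr h1 h2 h3 h4; rewrite !compl_compl // => /(_ h5 h6).
  rewrite (deg_compl e_irr) hreg /r; lia.
Qed.

End Main.


Lemma iso_deg2 (T : finType) (e : rel T) (e' : rel 'I_5) (F1 F2 : 'I_5 -> 'I_5) :
  iso e e' -> (forall i j, e' i j -> j = F1 i \/ j = F2 i) ->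
  forall x, exists y1 y2, forall y, e x y -> y = y1 \/ y = y2.
Proof.
case=> h [[g hK gK] he] hF x; exists (g (F1 (h x))), (g (F2 (h x))) => y.
by rewrite he => /hF [] <-; rewrite hK; [left|right].
Qed.

Lemma cyc_nbr (i j : 'I_5) : cycleG 5 i j ->
  j = inord ((val i).+1 %% 5) \/ j = inord ((val i + 4) %% 5).
Proof.
case: i j => [[|[|[|[|[|i]]]]] hi] [[|[|[|[|[|j]]]]] hj] //= _;
  solve [left; apply: val_inj; rewrite /= inordK // | right; apply: val_inj; rewrite /= inordK //].
Qed.

Lemma ccyc_nbr (i j : 'I_5) : compl (cycleG 5) i j ->
  j = inord ((val i + 2) %% 5) \/ j = inord ((val i + 3) %% 5).
Proof.
case: i j => [[|[|[|[|[|i]]]]] hi] [[|[|[|[|[|j]]]]] hj] //= _;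
  solve [left; apply: val_inj; rewrite /= inordK // | right; apply: val_inj; rewrite /= inordK //].
Qed.

Section Main2.
Variable T : finType.
Variable e : rel T.
Hypothesis e_sym : symmetric e.
Hypothesis e_irr : irreflexive e.
Hypothesis n4 : 4 <= #|T|.

Let ce_sym := compl_sym e_sym.
Let ce_irr := compl_irr e.

Lemma c5_eq : iso e (cycleG 5) -> gamma_qtR e + gamma_qtR (compl e) = #|T| + 5.
Proof.
move=> hi; have n5 := iso_card hi.
have hci := iso_compl hi.
have g1 : 5 <= gamma_qtR e.
  apply: gamma_ge; first by rewrite n5.
  move=> f hf; apply: (LB5 e_sym e_irr n5 _ hf).
  exact: iso_deg2 hi cyc_nbr.
have g2 : 5 <= gamma_qtR (compl e).
  apply: gamma_ge; first by rewrite n5.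
  move=> f hf; apply: (LB5 ce_sym ce_irr n5 _ hf).
  exact: iso_deg2 hci ccyc_nbr.
have := gamma_len e; have := gamma_len (compl e); rewrite n5; lia.
Qed.

Lemma iso_full_K (k : nat) : iso e (completeG k.+1) -> exists u, full e u.
Proof.
case=> h [[g hK gK] he]; exists (g ord0) => y nyu.
rewrite he /= gK; apply: contra nyu => /eqP ->; by rewrite hK.
Qed.

Lemma iso_full_K4me (e0 : rel T) : iso e0 K4_minus_e -> exists u, full e0 u.
Proof.
case=> h [[g hK gK] he]; exists (g (inord 2)) => y nyu.
rewrite he gK /K4_minus_e /= !inordK //=.
have : h y != inord 2 by apply: contra nyu => /eqP <-; rewrite hK.
by rewrite eq_sym => ->.
Qed.

Lemma F1_bound : inF1 e -> gamma_qtR e <= 3 /\ gamma_qtR (compl e) <= 4.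
Proof.
case/andP => /cards1P [u hu] /existsP [w /eqP dw].
have : u \in [set v | deg e v == #|T|.-1] by rewrite hu inE.
rewrite inE => /eqP /(deg_full e_irr) fu.
have [v nvu] := other u (leq_trans (isT : 2 <= 4) n4).
split; first by apply: (@U_full T e e_sym e_irr u v fu nvu).
have nwu : w != u by apply: contra_eq_neq dw => ->; rewrite ((deg_full e_irr u).2 fu); lia.
move: dw; rewrite /deg => /eqP /cards1P [t ht].
have tu : t = u.
  have : u \in [set y | e w y] by rewrite inE e_sym fu.
  by rewrite ht inE => /eqP.
have : 0 < #|~: [set u; w]|.
  by have := cardsC [set u; w]; rewrite cards2 eq_sym nwu; lia.
case/card_gt0P => z; rewrite !inE negb_or => /andP [nzu nzw].
have cwz : compl e w z.
  rewrite /compl /= eq_sym nzw /=; apply/negP => ewz.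
  have : z \in [set y | e w y] by rewrite inE.
  by rewrite ht tu inE (negbTE nzu).
have := U3 ce_sym ce_irr cwz; rewrite (deg_compl e_irr) /deg ht cards1; lia.
Qed.


Lemma mk_inF1 u w : full e u -> (forall v, full e v -> v = u) ->
  [set y | e w y] = [set u] -> inF1 e.
Proof.
move=> fu uq hw; apply/andP; split.
  apply/cards1P; exists u; apply/setP=> v; rewrite !inE.
  apply/eqP/eqP => [/(deg_full e_irr) /uq //| ->]; exact/(deg_full e_irr).
by apply/existsP; exists w; rewrite /deg hw cards1.
Qed.

Lemma isol_full u : full e u -> isol (compl e) u.
Proof.
move=> fu y; rewrite /compl /= negb_and negbK.
by case: (eqVneq u y) => [->|nuy] //=; rewrite fu // eq_sym.
Qed.

Lemma K u : full e u -> gamma_qtR (compl e) <= 4 ->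
  iso e (completeG 4) \/ iso e K4_minus_e \/ inF1 e.
Proof.
move=> fu g4.
have fuE : forall z, z != u -> e u z = true by move=> z h; apply: fu.
case: (boolP [exists v, (v != u) && fullb e v]) => [/existsP [u' /andP [nu' /fullP fu']] | nex].
  have fu'E : forall z, z != u' -> e u' z = true by move=> z h; apply: fu'.
  have n4e : #|T| = 4.
    apply/eqP; rewrite eqn_leq n4 andbT leqNgt; apply/negP => n5.
    have : 5 <= gamma_qtR (compl e).
      apply: gamma_ge => // f hf; apply: (LBa ce_sym ce_irr n5 _ _ _ hf).
      + exact: isol_full fu.
      + exact: isol_full fu'.
      + by rewrite eq_sym.
    lia.
  have /cards2P [x [y [nxy hS]]] : #|~: [set u; u']| == 2.
    by have := cardsC [set u; u']; rewrite cards2 eq_sym nu' n4e; lia.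
  have : x \in ~: [set u; u'] by rewrite hS !inE eqxx.
  rewrite !inE negb_or => /andP [nxu nxu'].
  have : y \in ~: [set u; u'] by rewrite hS !inE eqxx orbT.
  rewrite !inE negb_or => /andP [nyu nyu'].
  have cov : forall z, [|| z == u, z == u', z == x | z == y].
    move=> z; case: (eqVneq z u) => //= nzu; case: (eqVneq z u') => //= nzu'.
    have : z \in ~: [set u; u'] by rewrite !inE negb_or nzu nzu'.
    by rewrite hS !inE.
  case: (boolP (e x y)) => exy.
    left; apply: complete_iso; first exact: n4e.
    move=> a b.
    case: (eqVneq a b) => [->|nab]; first by rewrite e_irr.
    case: (eqVneq a u) => [eau|nau]; first by subst a; rewrite fuE ?nab // eq_sym nab.
    case: (eqVneq a u') => [eau|nau']; first by subst a; rewrite fu'E ?nab // eq_sym nab.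
    case: (eqVneq b u) => [ebu|nbu]; first by subst b; rewrite e_sym fuE ?nab.
    case: (eqVneq b u') => [ebu|nbu']; first by subst b; rewrite e_sym fu'E ?nab.
    move: (cov a) (cov b); rewrite (negbTE nau) (negbTE nau') (negbTE nbu) (negbTE nbu') /=.
    case/orP => /eqP ea; case/orP => /eqP eb; subst a b; rewrite ?e_irr ?eqxx ?exy ?nxy //; first [by rewrite eqxx in nab | by rewrite e_sym].
  right; left.
  apply: (@iso_seq _ _ 3 _ [:: x; y; u; u'] x).
  - rewrite /= !inE !negb_or nxy nxu nxu' nyu nyu' eq_sym nu' //.
  - by [].
  - by move=> z; rewrite !inE; move: (cov z); case/or4P => ->; rewrite ?orbT.
  have E1 := fuE x nxu; have E2 := fuE y nyu; have E3 := fuE u' nu'.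
  have E4 := fu'E x nxu'; have E5 := fu'E y nyu'; have E6 := negbTE exy.
  move=> [[|[|[|[|i]]]] hi] [[|[|[|[|j]]]] hj] //=; rewrite /K4_minus_e /=;
    rewrite ?e_irr ?E1 ?E2 ?E3 ?E4 ?E5 ?E6 //; rewrite e_sym ?E1 ?E2 ?E3 ?E4 ?E5 ?E6 //.
have uq : forall v, full e v -> v = u.
  move=> v fv; apply/eqP; apply/negPn/negP => nvu.
  by move: nex; rewrite negb_exists => /forallP /(_ v); rewrite nvu /=; move/fullP: fv => ->.
case: (ltnP 4 #|T|) => [n5|n4'].
  case: (boolP [exists w, (w != u) && [forall z, ((z != u) && (z != w)) ==> compl e w z]]).
    case/existsP => w /andP [nwu /forallP hz]; right; right.
    apply: (mk_inF1 (w := w) fu uq); apply/setP => y; rewrite !inE.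
    apply/idP/eqP => [ewy|->]; last by rewrite e_sym fuE.
    case: (eqVneq y u) => // nyu; have nyw : y != w by rewrite eq_sym (neq_of_e e_irr ewy).
    by move: (hz y); rewrite nyu nyw /= /compl /= ewy andbF.
  move=> nex2; exfalso.
  have : 5 <= gamma_qtR (compl e).
    apply: gamma_ge => // f hf; apply: (LBb ce_sym ce_irr n5 (isol_full fu) _ hf).
    move=> w nwu H; move: nex2; rewrite negb_exists => /forallP /(_ w); rewrite nwu /=.
    by move/negP; apply; apply/forallP => z; apply/implyP => /andP [h1 h2]; apply: H.
  lia.
have n4e : #|T| = 4 by lia.
have : 0 < #|[set~ u]| by rewrite cardsC1 n4e.
case/card_gt0P => p pS.
have /cards2P [q [r [nqr hS]]] : #|[set~ u] :\ p| == 2.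
  by move: (cardsD1 p [set~ u]); rewrite pS cardsC1 n4e => /eqP; rewrite eqSS => /eqP <-.
have : q \in [set~ u] :\ p by rewrite hS !inE eqxx.
rewrite !inE => /andP [nqp nqu].
have : r \in [set~ u] :\ p by rewrite hS !inE eqxx orbT.
rewrite !inE => /andP [nrp nru].
move: pS; rewrite !inE => npu.
have covl : forall z, z \in [:: u; p; q; r].
  move=> z; rewrite !inE; case: (eqVneq z u) => //= nzu; case: (eqVneq z p) => //= nzp.
  have : z \in [set~ u] :\ p by rewrite !inE nzu nzp.
  by rewrite hS !inE.
have mkfull : forall a, (forall t, t \in [:: u; p; q; r] -> t != a -> e a t) -> full e a.
  by move=> a h t nta; apply: h.
have mkdeg1 : forall a, a != u -> (forall t, t \in [:: p; q; r] -> ~~ e a t) ->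
    [set y | e a y] = [set u].
  move=> a nau h; apply/setP => y; rewrite !inE; apply/idP/eqP => [eay|->]; last by rewrite e_sym fuE.
  move: (covl y); rewrite inE => /orP [/eqP //|yl].
  by move: (h y yl); rewrite eay.
have Eu : forall t, t != u -> e t u by move=> t h; rewrite e_sym fuE.
right; right.
case epq: (e p q); case epr: (e p r); case eqr: (e q r).
- exfalso; have := npu; rewrite (uq p _) ?eqxx //; apply: mkfull => t.
  by rewrite !inE => /or4P [] /eqP -> //; rewrite ?eqxx ?(e_sym q p) ?(e_sym r p) ?(e_sym r q) ?epq ?epr ?eqr // => _; apply: Eu.
- exfalso; have := npu; rewrite (uq p _) ?eqxx //; apply: mkfull => t.
  by rewrite !inE => /or4P [] /eqP -> //; rewrite ?eqxx ?(e_sym q p) ?(e_sym r p) ?(e_sym r q) ?epq ?epr ?eqr // => _; apply: Eu.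
- exfalso; have := nqu; rewrite (uq q _) ?eqxx //; apply: mkfull => t.
  by rewrite !inE => /or4P [] /eqP -> //; rewrite ?eqxx ?(e_sym q p) ?(e_sym r p) ?(e_sym r q) ?epq ?epr ?eqr // => _; apply: Eu.
- apply: (mk_inF1 (w := r) fu uq); apply: mkdeg1 => // t.
  by rewrite !inE => /or3P [] /eqP ->; rewrite ?e_irr ?(e_sym q p) ?(e_sym r p) ?(e_sym r q) ?epq ?epr ?eqr.
- exfalso; have := nru; rewrite (uq r _) ?eqxx //; apply: mkfull => t.
  by rewrite !inE => /or4P [] /eqP -> //; rewrite ?eqxx ?(e_sym q p) ?(e_sym r p) ?(e_sym r q) ?epq ?epr ?eqr // => _; apply: Eu.
- apply: (mk_inF1 (w := q) fu uq); apply: mkdeg1 => // t.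
  by rewrite !inE => /or3P [] /eqP ->; rewrite ?e_irr ?(e_sym q p) ?(e_sym r p) ?(e_sym r q) ?epq ?epr ?eqr.
- apply: (mk_inF1 (w := p) fu uq); apply: mkdeg1 => // t.
  by rewrite !inE => /or3P [] /eqP ->; rewrite ?e_irr ?(e_sym q p) ?(e_sym r p) ?(e_sym r q) ?epq ?epr ?eqr.
- apply: (mk_inF1 (w := p) fu uq); apply: mkdeg1 => // t.
  by rewrite !inE => /or3P [] /eqP ->; rewrite ?e_irr ?(e_sym q p) ?(e_sym r p) ?(e_sym r q) ?epq ?epr ?eqr.
Qed.

End Main2.



Lemma complK4 : compl (completeG 4) = emptyG 4.
Proof.
apply: functional_extensionality => i; apply: functional_extensionality => j.
by rewrite /compl /= andbN.
Qed.

Lemma complE4 : compl (emptyG 4) = completeG 4.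
Proof.
apply: functional_extensionality => i; apply: functional_extensionality => j.
by rewrite /compl /= andbT.
Qed.

Theorem mainTheorem10 (T : finType) (e : rel T)
  (e_sym : symmetric e) (e_irr : irreflexive e) (n4 : 4 <= #|T|) :
  let s := gamma_qtR e + gamma_qtR (compl e) in
  [/\ 7 <= s, s <= #|T| + 5,
      s = 7 <-> (iso e (completeG 4) \/ iso e (emptyG 4) \/ iso e K4_minus_e
                 \/ iso (compl e) K4_minus_e \/ inF1 e \/ inF1' e)
    & s = #|T| + 5 <-> iso e (cycleG 5)].
Proof.
have ce_sym := compl_sym e_sym; have ce_irr := compl_irr e.
have l7 := lower7 e_sym e_irr n4.
move=> s; split.
- exact: l7.
- exact: upper5 e_sym e_irr n4.
- split.
  + move=> h7.
    case: (trichot e) => [[u fu]|[[x fx]|h]].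
    * have g3 := gam3 e_sym e_irr (leq_trans (isT : 3 <= 4) n4).
      have g4 : gamma_qtR (compl e) <= 4 by rewrite /s in h7; lia.
      case: (K e_sym e_irr n4 fu g4) => [h|[h|h]]; tauto.
    * have g3 := gam3 ce_sym ce_irr (leq_trans (isT : 3 <= 4) n4).
      have g4 : gamma_qtR (compl (compl e)) <= 4 by rewrite compl_complE //; rewrite /s in h7; lia.
      case: (K ce_sym ce_irr n4 fx g4) => [h|[h|h]].
      - right; left; have := iso_compl h; rewrite compl_complE // complK4; done.
      - tauto.
      - by right; right; right; right; right.
    * have := gam4 e_sym e_irr n4 (fun x => proj1 (h x)).
      have := gam4 ce_sym ce_irr n4 (fun x => proj2 (h x)).
      rewrite /s in h7; lia.
  + move=> H; apply/eqP; rewrite eqn_leq l7 andbT.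
    have small : #|T| = 4 -> (exists u, full e u) \/ (exists x, full (compl e) x) -> s <= 7.
      by move=> h4 hf; have := full_small e_sym e_irr n4 hf; rewrite h4.
    case: H => [h|[h|[h|[h|[h|h]]]]].
    * apply: small; first exact: iso_card h.
      by left; exact: iso_full_K h.
    * apply: small; first exact: iso_card h.
      by right; have := iso_compl h; rewrite complE4; exact: iso_full_K.
    * apply: small; first exact: iso_card h.
      by left; exact: iso_full_K4me h.
    * apply: small; first exact: iso_card h.
      by right; exact: iso_full_K4me h.
    * by have [] := F1_bound e_sym e_irr n4 h; rewrite /s; lia.
    * have [] := F1_bound ce_sym ce_irr n4 h; rewrite compl_complE //; rewrite /s; lia.
- split; [exact: eq5 e_sym e_irr n4 | exact: c5_eq e_sym e_irr n4].
Qed.
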